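(* Let $\mathcal{T}=(V,A,E,f,q,v_0)$ be a decorated rooted tree that has negative determinants and satisfies $f(A)\subseteq\mathbb{N}=\{0,1,2,\dots\}$. Let $v,v'\in V$ with $v<v'$ and suppose the path $\gamma=\gamma_{v,v'}=(x_0,\dots,x_n)$ is linear; let $q=q(\{x_0,x_1\},v)$ and $Q'=Q(\{x_{n-1},x_n\},v')$. (a) $q>0$, $Q'>0$, and $q\,N_{v'}-Q'\,N_v\le0$. (b) If there exists $\alpha\in A\setminus A_0$ with $\alpha>v'$, then $q\,N_{v'}-Q'\,N_v<0$.
   Context: A graph is a pair $(X_0,X_1)$ of finite sets such that each element of $X_1$ (an edge) is a $2$-element subset of $X_0$; elements of $X_0$ are cells. The valency $\delta_x$ of a cell is the number of edges containing it. A path is a tuple $(x_0,\dots,x_n)$ ($n\ge0$) of cells with $\{x_i,x_{i+1}\}$ an edge for each $i<n$, these edges pairwise distinct; a cell/edge is in the path if it is some $x_i$ / some $\{x_i,x_{i+1}\}$. The graph is a tree if any two cells $x,y$ are joined by a unique path $\gamma_{x,y}$. A decorated tree is $(V,A,E,f,q)$ with $V$ (vertices), $A$ (arrows) finite disjoint sets, $(V\cup A,E)$ a tree, every arrow of valency $1$, $f:A\to\mathbb{Z}$, $q(e,x)\in\mathbb{Z}$ for each $e\in E$, $x\in e$, with $q(e,\alpha)=1$ for $\alpha\in A$, and for each $v\in V$ and distinct edges $e,e'\ni v$, $\gcd(q(e,v),q(e',v))=1$. $A_0=\{\alpha\in A:f(\alpha)=0\}$. For $x\in V\cup A$, $e\ni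 x$: $Q(e,x)=\prod q(e',x)$ over edges $e'\ne e$ containing $x$ (empty product $=1$); $\det(\{x,y\})=q(e,x)q(e,y)-Q(e,x)Q(e,y)$ for $e=\{x,y\}$. An edge $\varepsilon$ is incident to a path $\gamma$ if it is not in $\gamma$ but contains a cell $u$ of $\gamma$; $q(\varepsilon,\gamma):=q(\varepsilon,u)$. For $v\ne\alpha$, $v\in V\cup A$, $\alpha\in A$: $x_{v,\alpha}=f(\alpha)\prod_\varepsilon q(\varepsilon,\gamma_{v,\alpha})$ over edges incident to $\gamma_{v,\alpha}$. For $v\in V\cup A_0$, $N_v=\sum_{\alpha\in A\setminus A_0}x_{v,\alpha}$. A path $(x_0,\dots,x_n)$, $n>0$, is linear if $\delta_{x_i}=2$ for all $0<i<n$. A root of $(V,A,E,f,q)$ is a vertex $v_0$ with $q(e,v_0)=1$ for every edge $e\ni v_0$ such that for every $v\in V\setminus\{v_0\}$, all edges $e\ni v$ not in $\gamma_{v_0,v}$ satisfy $q(e,v)\ge1$ and at most one of them satisfies $q(e,v)\ne1$. A decorated rooted tree is $(V,A,E,f,q,v_0)$ with $v_0$ a root. For distinct $x,y\in V\cup A$, $x<y$ means $x$ is in $\gamma_{v_0,y}$. $\mathcal{T}$ has negative determinants if $\det(e)<0$ for every edge $e=\{x,y\}$ with $x,y\in V$. *)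

(* Defs.v *)
From Stdlib Require Import ClassicalEpsilon.
From mathcomp Require Import all_boot all_order all_algebra.
Set Implicit Arguments. Unset Strict Implicit. Unset Printing Implicit Defensive.
Import Order.TTheory GRing.Theory Num.Theory.
Local Open Scope ring_scope.

(* Cells are the elements of a finite type T (= V ∪ A); edges are 2-element
   subsets of T. *)

Definition edges_of (T : finType) (p : seq T) : seq {set T} :=
  [seq [set xy.1; xy.2] | xy <- zip p (behead p)].

Definition is_path (T : finType) (E : {set {set T}}) (x y : T) (p : seq T) : bool :=
  [&& p != [::], head x p == x, last x p == y,
      all (fun e => e \in E) (edges_of p) & uniq (edges_of p)].

Definition is_tree (T : finType) (E : {set {set T}}) : Prop :=
  forall x y : T, exists! p : seq T, is_path E x y p.

Definition gamma (T : finType) (E : {set {set T}}) (x y : T) : seq T :=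
  epsilon (inhabits [:: x]) (fun p => is_path E x y p).

Definition valency (T : finType) (E : {set {set T}}) (x : T) : nat :=
  #|[set e in E | x \in e]|.

Definition Qf (T : finType) (E : {set {set T}}) (q : {set T} -> T -> int)
  (e : {set T}) (x : T) : int :=
  \prod_(e' in E | (x \in e') && (e' != e)) q e' x.

Definition detE (T : finType) (E : {set {set T}}) (q : {set T} -> T -> int)
  (x y : T) : int :=
  q [set x; y] x * q [set x; y] y - Qf E q [set x; y] x * Qf E q [set x; y] y.

Definition xva (T : finType) (E : {set {set T}}) (f : T -> int)
  (q : {set T} -> T -> int) (v a : T) : int :=
  let g := gamma E v a in
  f a * \prod_(eps in E | (eps \notin edges_of g) && has (fun u => u \in eps) g)
          q eps (nth v g (find (fun u => u \in eps) g)).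

(* N_v = sum over alpha in A \ A_0 of x_{v,alpha} *)
Definition Nv (T : finType) (A : {set T}) (E : {set {set T}}) (f : T -> int)
  (q : {set T} -> T -> int) (v : T) : int :=
  \sum_(a in A | f a != 0) xva E f q v a.

Definition linear_path (T : finType) (E : {set {set T}}) (p : seq T) : bool :=
  match p with
  | [::] => false
  | x :: _ => (1 < size p)%N &&
              all (fun i => valency E (nth x p i) == 2%N) (iota 1 (size p - 2))
  end.

Definition decorated_tree (T : finType) (V A : {set T}) (E : {set {set T}})
  (f : T -> int) (q : {set T} -> T -> int) : Prop :=
  [disjoint V & A] /\ V :|: A = [set: T] /\
  (forall e, e \in E -> #|e| = 2%N) /\
  is_tree E /\
  (forall a, a \in A -> valency E a = 1%N) /\
  (forall e a, e \in E -> a \in A -> a \in e -> q e a = 1) /\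
  (forall v e e', v \in V -> e \in E -> e' \in E -> v \in e -> v \in e' ->
     e != e' -> gcdz (q e v) (q e' v) = 1).

Definition is_root (T : finType) (V : {set T}) (E : {set {set T}})
  (q : {set T} -> T -> int) (v0 : T) : Prop :=
  [/\ v0 \in V,
      (forall e, e \in E -> v0 \in e -> q e v0 = 1) &
      (forall v, v \in V -> v != v0 ->
         (forall e, e \in E -> v \in e -> e \notin edges_of (gamma E v0 v) -> 1 <= q e v)
         /\ (#|[set e in E | [&& v \in e, e \notin edges_of (gamma E v0 v) & q e v != 1]]|
               <= 1)%N)].

Definition tree_lt (T : finType) (E : {set {set T}}) (v0 x y : T) : bool :=
  (x != y) && (x \in gamma E v0 y).

Definition negative_dets (T : finType) (V : {set T}) (E : {set {set T}})
  (q : {set T} -> T -> int) : Prop :=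
  forall x y, x \in V -> y \in V -> [set x; y] \in E -> detE E q x y < 0.

(* Main.v *)
Require Import Defs.
From Stdlib Require Import ClassicalEpsilon.
From mathcomp Require Import all_boot all_order all_algebra.
From mathcomp Require Import zify ring lra.
Import Order.TTheory GRing.Theory Num.Theory.
Local Open Scope ring_scope.
Set Implicit Arguments. Unset Strict Implicit. Unset Printing Implicit Defensive.

Section Paths.
Variable (T : finType) (E : {set {set T}}).

Definition adj (a b : T) : bool := [set a; b] \in E.

Lemma adj_sym : symmetric adj.
Proof. by move=> a b; rewrite /adj setUC. Qed.

Lemma edges_cons2 (x y : T) s : edges_of (x :: y :: s) = [set x; y] :: edges_of (y :: s).
Proof. by []. Qed.

Lemma edges_cell eps (s : seq T) z : eps \in edges_of s -> z \in eps -> z \in s.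
Proof.
elim: s => [|x s IH] //; case: s IH => [|y s] IH //.
rewrite edges_cons2 in_cons => /orP[/eqP->|H] Hz.
  by move: Hz; rewrite !inE => /orP[]/eqP->; rewrite eqxx ?orbT.
by rewrite in_cons (IH H Hz) orbT.
Qed.

Lemma edges_all (x : T) s : all (fun e => e \in E) (edges_of (x :: s)) = path adj x s.
Proof. by elim: s x => [|y s IH] x //=; rewrite -IH. Qed.

Lemma edges_uniq (x : T) s : uniq (x :: s) -> uniq (edges_of (x :: s)).
Proof.
elim: s x => [|y s IH] x //= /andP[Hx Hu].
rewrite -/(edges_of (y :: s)) (IH _ Hu) andbT.
apply/negP => H; move: (edges_cell H (setU11 x [set y])).
by rewrite (negbTE Hx).
Qed.

Lemma edges_cat s1 (c : T) s2 :
  edges_of (s1 ++ c :: s2) = edges_of (rcons s1 c) ++ edges_of (c :: s2).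
Proof.
elim: s1 => [|x s1 IH] //; case: s1 IH => [|y s1] IH //.
rewrite cat_cons rcons_cons. rewrite [in LHS]/edges_of /=. rewrite -/(edges_of _) IH. by [].
Qed.

Lemma edges_first (x y : T) s eps : uniq (x :: y :: s) -> eps \in edges_of (x :: y :: s) ->
  x \in eps -> eps = [set x; y].
Proof.
rewrite edges_cons2 in_cons => /andP[Hx _] /orP[/eqP//|H] Hxe.
by move: (edges_cell H Hxe); rewrite (negbTE Hx).
Qed.

Lemma edges_rev (s : seq T) : edges_of (rev s) =i edges_of s.
Proof.
elim: s => [|x s IH] //; case: s IH => [|y s] IH //.
move=> eps.
have -> : rev [:: x, y & s] = rev s ++ y :: [:: x].
  by rewrite rev_cons rev_cons -!cats1 -catA.
rewrite edges_cat -rev_cons mem_cat IH edges_cons2 edges_cons2 !in_cons in_nil.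
by rewrite setUC orbF orbC.
Qed.

Lemma edges_last s (a b : T) eps : uniq (rcons (rcons s a) b) ->
  eps \in edges_of (rcons (rcons s a) b) -> b \in eps -> eps = [set a; b].
Proof.
move=> Hu; rewrite -edges_rev !rev_rcons => H Hb.
rewrite setUC; apply: (edges_first _ H Hb).
by rewrite -!rev_rcons rev_uniq.
Qed.

Lemma edges_mem_rev (s : seq T) eps : (eps \in edges_of (rev s)) = (eps \in edges_of s).
Proof. exact: edges_rev. Qed.

Definition upath (x : T) s y := [&& path adj x s, last x s == y & uniq (x :: s)].

Lemma upath_is_path x s y : upath x s y -> is_path E x y (x :: s).
Proof.
case/and3P=> Hp Hl Hu; apply/and5P; split => //.
  by rewrite edges_all.
exact: edges_uniq.
Qed.

Lemma upath_cat x s1 c s2 y : upath x s1 c -> upath c s2 y ->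
  ~~ has (mem (x :: s1)) s2 -> upath x (s1 ++ s2) y.
Proof.
case/and3P=> Hp1 /eqP Hl1 Hu1 /and3P[Hp2 Hl2 Hu2] Hd.
rewrite /upath cat_path last_cat Hl1 Hp1 Hp2 Hl2 /=.
have H : uniq ((x :: s1) ++ s2) by rewrite cat_uniq Hu1 Hd /=; case/andP: Hu2.
exact: H.
Qed.

Lemma upath_split x s1 c s2 y : upath x (s1 ++ c :: s2) y ->
  upath x (rcons s1 c) c /\ upath c s2 y.
Proof.
case/and3P=> Hp /eqP Hl Hu; move: Hp Hu; rewrite -cat_rcons cat_path last_rcons.
case/andP=> Hp1 Hp2; rewrite -cat_cons cat_uniq => /and3P[Hu1 Hd Hu2].
split; first by rewrite /upath Hp1 last_rcons eqxx.
rewrite /upath Hp2 -Hl -cat_rcons last_cat last_rcons eqxx /= Hu2 andbT.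
apply: contra Hd => Hc; apply/hasP; exists c => //.
by rewrite in_cons mem_rcons in_cons eqxx orbT.
Qed.

Lemma upath_rev x s y : upath x s y -> exists s', y :: s' = rev (x :: s) /\ upath y s' x.
Proof.
case/and3P=> Hp /eqP Hl Hu; exists (rev (belast x s)).
have Hr : y :: rev (belast x s) = rev (x :: s) by rewrite -rev_rcons -Hl -lastI.
split=> //; rewrite /upath -Hl rev_path.
have -> : path (fun z : T => adj^~ z) x s = path adj x s.
  by apply: eq_path => a b; rewrite adj_sym.
rewrite Hp Hl Hr rev_uniq Hu andbT /=.
by rewrite -(last_cons x) Hr rev_cons last_rcons.
Qed.

End Paths.


Section Tree.
Variable (T : finType) (E : {set {set T}}).
Hypothesis E2 : forall e, e \in E -> #|e| = 2%N.
Hypothesis tree : is_tree E.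

Local Notation upath := (upath E).
Local Notation adj := (adj E).

Lemma upath_nil x : upath x [::] x.
Proof. by rewrite /upath /= eqxx. Qed.

Lemma is_path_unique x y p p' : is_path E x y p -> is_path E x y p' -> p = p'.
Proof.
move=> H H'; case: (tree x y) => p0 [_ U].
by rewrite -(U _ H) -(U _ H').
Qed.

Lemma is_path_upath (x y : T) p : is_path E x y p -> exists s, p = x :: s /\ upath x s y.
Proof.
move=> H; have H0 := H; case/and5P: H => Hne Hh Hl Ha Hu.
case: p Hne Hh Hl Ha Hu H0 => [//|z s] _ /= /eqP Hz; subst z.
rewrite edges_all => Hl Hp _ H0; exists s; split => //.
move: Hl; case/shortenP: Hp => s' Hp' Hu' _ Hl'.
have Hs' : upath x s' y by rewrite /upath Hp' Hl' Hu'.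
have := is_path_unique H0 (upath_is_path Hs') => -[->].
exact: Hs'.
Qed.

Lemma upath_unique x s s' y : upath x s y -> upath x s' y -> s = s'.
Proof.
move=> H H'; have := is_path_unique (upath_is_path H) (upath_is_path H').
by case.
Qed.

Lemma gamma_upath x y : exists s, gamma E x y = x :: s /\ upath x s y.
Proof.
apply: is_path_upath; rewrite /gamma.
apply: (@epsilon_spec (seq T) (inhabits [:: x]) (fun p => is_path E x y p)).
by case: (tree x y) => p [Hp _]; exists p.
Qed.

Lemma gamma_eq x s y : upath x s y -> gamma E x y = x :: s.
Proof.
move=> H; case: (gamma_upath x y) => s' [-> H'].
by rewrite (upath_unique H H').
Qed.

Lemma mem_split (u : seq T) a : a \in u -> exists s1 s2, u = s1 ++ a :: s2.
Proof. by case/splitPr => s1 s2; exists s1, s2. Qed.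

Lemma upath_split_full x s y s1 c s2 : upath x s y -> x :: s = s1 ++ c :: s2 ->
  (exists w, x :: w = rcons s1 c /\ upath x w c) /\ upath c s2 y.
Proof.
case: s1 => [|x' s1] /= H [] Hx Hs.
  by subst; split => //; exists [::]; split => //; exact: upath_nil.
subst x'; subst s; case: (upath_split H) => H1 H2; split => //.
by exists (rcons s1 c).
Qed.

Lemma upath_infix x s y u1 a m b u2 : upath x s y ->
  x :: s = u1 ++ a :: m ++ b :: u2 -> upath a (rcons m b) b.
Proof.
move=> H Heq; case: (upath_split_full H Heq) => _ H2.
by case: (upath_split H2).
Qed.

Lemma edges_rcons2 w (a b : T) : [set a; b] \in edges_of (rcons (rcons w a) b).
Proof.
have -> : rcons (rcons w a) b = w ++ a :: [:: b] by rewrite -!cats1 -catA.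
by rewrite edges_cat mem_cat edges_cons2 in_cons eqxx orbT.
Qed.

Lemma chord x s y eps a b : upath x s y -> eps \in E -> eps \notin edges_of (x :: s) ->
  a \in x :: s -> b \in x :: s -> a != b -> a \in eps -> b \in eps -> False.
Proof.
move=> H HE Hne Ha Hb Hab Hae Hbe.
have Heps : eps = [set a; b].
  apply/eqP; rewrite eq_sym eqEcard (E2 HE) cards2 Hab andbT.
  by apply/subsetP => z; rewrite !inE => /orP[]/eqP->.
wlog [s1 [s2 [Heq Hb2]]] : a b Ha Hb Hab Hae Hbe Heps / exists s1 s2, x :: s = s1 ++ a :: s2 /\ b \in s2.
  move=> W; case: (mem_split Ha) => s1 [s2 Heq].
  move: Hb; rewrite Heq mem_cat in_cons => Hb. have {}Hb : (b \in s1) || (b \in s2). by move: Hb; rewrite eq_sym (negbTE Hab). move: Hb => /orP[Hb1|Hb2].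
    case: (mem_split Hb1) => t1 [t2 Ht].
    apply: (W b a) => //.
    - by rewrite Heq mem_cat Hb1.
    - by rewrite eq_sym.
    - by rewrite Heps setUC.
    exists t1, (t2 ++ a :: s2); split; first by rewrite Heq Ht -catA.
    by rewrite mem_cat in_cons eqxx orbT.
  apply: (W a b) => //; last by exists s1, s2. by rewrite Heq mem_cat in_cons Hb2 !orbT.
case: (mem_split Hb2) => m [u2 Hm]; subst s2.
have Hp := upath_infix H Heq.
have Hp1 : upath a [:: b] b by rewrite /upath /= /adj -Heps HE eqxx /= in_cons (negbTE Hab).
have Hm0 : m = [::].
  have := upath_unique Hp Hp1; clear -Hp; case: m {Hp} => [//|z m] /= [] _; by case: m.
subst m; move: Hne; rewrite Heq edges_cat mem_cat cat0s edges_cons2 in_cons -Heps eqxx.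
by rewrite orbT.
Qed.

Lemma val2 c e1 e2 eps : valency E c = 2%N -> e1 \in E -> e2 \in E -> eps \in E ->
  c \in e1 -> c \in e2 -> c \in eps -> e1 != e2 -> eps = e1 \/ eps = e2.
Proof.
move=> Hv H1 H2 H3 C1 C2 C3 H12.
case: (eqVneq eps e1) => [|N1]; first by left.
case: (eqVneq eps e2) => [|N2]; first by right.
have : (size [:: e1; e2; eps] <= size (enum [set e in E | c \in e]))%N.
  apply: uniq_leq_size; first by rewrite /= !in_cons in_nil !orbF negb_or H12 (eq_sym e1 eps) N1 (eq_sym e2 eps) N2.
  by move=> z; rewrite mem_enum !inE => /or3P[]/eqP->; rewrite ?H1 ?H2 ?H3 ?C1 ?C2 ?C3.
by rewrite -cardE -/(valency E c) Hv.
Qed.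

Lemma val1 c e1 e2 : valency E c = 1%N -> e1 \in E -> e2 \in E ->
  c \in e1 -> c \in e2 -> e1 = e2.
Proof.
move=> Hv H1 H2 C1 C2; apply/eqP; apply/negP => /negP H12.
have : (size [:: e1; e2] <= size (enum [set e in E | c \in e]))%N.
  apply: uniq_leq_size; first by rewrite /= !in_cons in_nil !orbF H12.
  by move=> z; rewrite mem_enum !inE => /orP[]/eqP->; rewrite ?H1 ?H2 ?C1 ?C2.
by rewrite -cardE -/(valency E c) Hv.
Qed.

Lemma split_last_has (P : pred T) u : has P u ->
  exists u1 c u2, [/\ u = u1 ++ c :: u2, P c & ~~ has P u2].
Proof.
elim/last_ind: u => [//|u z IH].
rewrite has_rcons; case: (boolP (P z)) => Pz /= H.
  by exists u, z, [::]; rewrite cats1.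
case: (IH H) => u1 [c [u2 [-> Pc Hn]]].
exists u1, c, (rcons u2 z); split => //; first by rewrite rcons_cat.
by rewrite has_rcons negb_or Pz.
Qed.

Lemma dec x s y t z : upath x s y -> upath y t z -> exists s1 c s2 t2,
  [/\ x :: s = s1 ++ c :: s2, y :: t = rev s2 ++ c :: t2,
      ~~ has (mem (x :: s)) t2 & gamma E x z = s1 ++ c :: t2].
Proof.
move=> Hs Ht.
have Hy : has (mem (x :: s)) (y :: t).
  apply/hasP; exists y; first exact: mem_head.
  by case/and3P: Hs => _ /eqP <- _; rewrite /= mem_last.
case: (split_last_has Hy) => u1 [c [t2 [Heq Hc Hn]]].
case: (mem_split Hc) => s1 [s2 Hseq].
case: (upath_split_full Ht Heq) => [[w [Hw Hyw]] Hct2].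
case: (upath_split_full Hs Hseq) => [[w1 [Hw1 Hxw1]] Hcs2].
case: (upath_rev Hyw) => w' [Hw' Hcw'].
move: Hw'; rewrite Hw rev_rcons => -[Hw'].
have E1 := upath_unique Hcw' Hcs2.
exists s1, c, s2, t2; split => //.
  by rewrite Heq -E1 Hw' revK.
have Hd : ~~ has (mem (x :: w1)) t2.
  apply: contra Hn => /hasP [z' Hz' Hm]; apply/hasP; exists z' => //.
  have : z' \in x :: w1 := Hm.
  rewrite Hw1 mem_rcons in_cons => Hm'.
  suff : z' \in x :: s by [].
  rewrite Hseq mem_cat in_cons; case/orP: Hm' => ->; by rewrite ?orbT.
rewrite (gamma_eq (upath_cat Hxw1 Hct2 Hd)) -cat_cons Hw1 cat_rcons.
by [].
Qed.

End Tree.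


Section Gen.
Variable (T : finType) (E : {set {set T}}).
Hypothesis E2 : forall e, e \in E -> #|e| = 2%N.
Hypothesis tree : is_tree E.
Variable q : {set T} -> T -> int.

Local Notation upath := (upath E).
Local Notation adj := (adj E).

Definition Fq (s : seq T) (d : T) (eps : {set T}) : int :=
  if (eps \notin edges_of s) && has (fun u => u \in eps) s
  then q eps (nth d s (find (fun u => u \in eps) s)) else 1.

Lemma xva_Fq f v a : xva E f q v a = f a * \prod_(eps in E) Fq (gamma E v a) v eps.
Proof. by rewrite /xva big_mkcondr. Qed.

Lemma Fq_val (s : seq T) (d : T) (eps : {set T}) (u : T) :
  (forall a b, a \in s -> b \in s -> a \in eps -> b \in eps -> a = b) ->
  eps \notin edges_of s -> u \in s -> u \in eps -> Fq s d eps = q eps u.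
Proof.
move=> U Hne Hu Hue.
have Hh : has (fun u => u \in eps) s by apply/hasP; exists u.
rewrite /Fq Hne Hh /=; congr (q eps _); apply: U => //.
  by apply: mem_nth; rewrite -has_find.
exact: (nth_find d Hh).
Qed.

Lemma Fq_edge (s : seq T) (d : T) (eps : {set T}) : eps \in edges_of s -> Fq s d eps = 1.
Proof. by rewrite /Fq => ->. Qed.

Lemma Fq_nohas (s : seq T) (d : T) (eps : {set T}) : ~~ has (fun u => u \in eps) s -> Fq s d eps = 1.
Proof. by rewrite /Fq => /negbTE ->; rewrite andbF. Qed.

Lemma interior_edges (h0 : T) hm hl t zz :
  upath h0 (hm ++ hl :: t) zz -> (forall c, c \in hm -> valency E c = 2%N) ->
  forall c e, c \in hm -> e \in E -> c \in e -> e \in edges_of (h0 :: hm ++ hl :: t).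
Proof.
move=> Hup Hval.
have Hu : uniq (h0 :: hm ++ hl :: t) by case/and3P: Hup.
have Hpath : path adj h0 (hm ++ hl :: t) by case/and3P: Hup.
have EsE : forall e, e \in edges_of (h0 :: hm ++ hl :: t) -> e \in E.
  by move=> e He; move: Hpath; rewrite -edges_all => /allP; apply.
  move=> c e Hc He Hce.
case: (mem_split Hc) => m1 [m2 Hm]; subst hm.
have Hs3 : h0 :: (m1 ++ c :: m2) ++ hl :: t = (h0 :: m1) ++ c :: (m2 ++ hl :: t).
  by rewrite /= -catA.
have Hst : m2 ++ hl :: t = head hl m2 :: behead (m2 ++ hl :: t) by clear; case: m2.
have e1in : [set last h0 m1; c] \in edges_of (h0 :: (m1 ++ c :: m2) ++ hl :: t).
  by rewrite Hs3 edges_cat mem_cat lastI edges_rcons2.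
have e2in : [set c; head hl m2] \in edges_of (h0 :: (m1 ++ c :: m2) ++ hl :: t).
  by rewrite Hs3 edges_cat mem_cat Hst edges_cons2 mem_head orbT.
have Hne : [set last h0 m1; c] != [set c; head hl m2].
  apply/eqP => Heq.
  have : last h0 m1 \in [set c; head hl m2] by rewrite -Heq set21.
  rewrite !inE => Hab.
  move: Hu; rewrite Hs3 cat_uniq => /and3P[_ /hasP H _]; apply: H.
  exists (last h0 m1); last exact: mem_last.
  case/orP: Hab => /eqP ->; rewrite in_cons ?eqxx //; by rewrite Hst in_cons eqxx orbT.
case: (val2 (Hval c Hc) (EsE _ e1in) (EsE _ e2in) He (set22 _ _) (set21 _ _) Hce Hne) => ->.
  exact: e1in.
exact: e2in.
Qed.

Lemma gen_main (h0 : T) hm hl t zz (d d' : T) :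
  upath h0 (hm ++ hl :: t) zz -> (forall c, c \in hm -> valency E c = 2%N) ->
  forall eps, eps \in E ->
  Fq (h0 :: hm ++ hl :: t) d eps =
    (if (h0 \in eps) && (eps != [set h0; head hl hm]) then q eps h0 else 1) *
    (if eps == [set last h0 hm; hl] then 1 else Fq (hl :: t) d' eps).
Proof.
move=> Hup Hval eps HE.
have Hu : uniq (h0 :: hm ++ hl :: t) by case/and3P: Hup.
have Hpath : path adj h0 (hm ++ hl :: t) by case/and3P: Hup.
have EsE : forall e, e \in edges_of (h0 :: hm ++ hl :: t) -> e \in E.
  by move=> e He; move: Hpath; rewrite -edges_all => /allP; apply.
have Es : edges_of (h0 :: hm ++ hl :: t) =
   edges_of (rcons (h0 :: hm) hl) ++ edges_of (hl :: t) := edges_cat (h0 :: hm) hl t.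
have Hu2 : uniq ((h0 :: hm) ++ hl :: t) := Hu.
have Disj : forall w, w \in h0 :: hm -> w \in hl :: t -> False.
  move=> w H1 H2; move: Hu2; rewrite cat_uniq => /and3P[_ /hasP H _]; apply: H.
  by exists w.
have Hsub : forall w, w \in hl :: t -> w \in h0 :: hm ++ hl :: t.
  by move=> w Hw; rewrite -cat_cons mem_cat Hw orbT.
have Uniq1 : eps \notin edges_of (h0 :: hm ++ hl :: t) -> forall a b,
    a \in h0 :: hm ++ hl :: t -> b \in h0 :: hm ++ hl :: t -> a \in eps -> b \in eps -> a = b.
  move=> Hne a b Ha Hb Hae Hbe; case: (eqVneq a b) => // Hab.
  by case: (chord E2 tree Hup HE Hne Ha Hb Hab Hae Hbe).
have Hs2 : h0 :: hm ++ hl :: t = h0 :: head hl hm :: behead (hm ++ hl :: t) by clear; case: hm.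
have f1 : [set last h0 hm; hl] \in edges_of (h0 :: hm ++ hl :: t).
  by rewrite Es mem_cat lastI edges_rcons2.
have f2 : [set h0; head hl hm] \in edges_of (h0 :: hm ++ hl :: t).
  by rewrite Hs2 edges_cons2 mem_head.
have f3 : forall e, e \in edges_of (h0 :: hm ++ hl :: t) -> h0 \in e -> e = [set h0; head hl hm].
  move=> e; rewrite Hs2 => He H0; apply: (edges_first _ He H0).
  by rewrite -Hs2.
have Hur : uniq (rcons (h0 :: hm) hl).
  by move: Hu2; rewrite -cat_rcons cat_uniq => /andP[].
have f4 : forall e, e \in edges_of (rcons (h0 :: hm) hl) -> hl \in e -> e = [set last h0 hm; hl].
  move=> e; rewrite lastI => He Hl; apply: (edges_last _ He Hl).
  by rewrite -lastI.
have f5 : forall c e, c \in hm -> e \in E -> c \in e -> e \in edges_of (h0 :: hm ++ hl :: t).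
  by move=> c e Hc He Hce; apply: (interior_edges Hup Hval Hc He Hce).
case: (eqVneq eps [set last h0 hm; hl]) => Hel.
  rewrite Hel ?eqxx mulr1 (Fq_edge _ f1).
  case: (boolP (h0 \in [set last h0 hm; hl])) => H0 //=.
  by rewrite (f3 _ f1 H0) eqxx.
rewrite ?(negbTE Hel).
case: (boolP ((h0 \in eps) && (eps != [set h0; head hl hm]))) => Hc.
  case/andP: Hc => H0 Hne0.
  have Hnot : eps \notin edges_of (h0 :: hm ++ hl :: t).
    by apply: contra Hne0 => H; rewrite (f3 _ H H0).
  rewrite (Fq_val _ (Uniq1 Hnot) Hnot (mem_head _ _) H0) Fq_nohas ?mulr1 //.
  apply/hasP => -[w Hw Hwe].
  have Hw0 := Uniq1 Hnot _ _ (Hsub w Hw) (mem_head _ _) Hwe H0.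
  by subst w; apply: (Disj h0 (mem_head _ _) Hw).
rewrite mul1r.
case: (boolP (eps \in edges_of (h0 :: hm ++ hl :: t))) => Hin.
  have := Hin; rewrite Es mem_cat => /orP[HinU|HinP]; last first.
    by rewrite (Fq_edge _ Hin) (Fq_edge _ HinP).
  rewrite (Fq_edge _ Hin) Fq_nohas //.
  apply/hasP => -[w Hw Hwe].
  have := edges_cell HinU Hwe; rewrite mem_rcons in_cons => /orP[/eqP Hwl|Hw'].
    by subst w; move: Hel; rewrite (f4 _ HinU Hwe) eqxx.
  exact: (Disj w Hw' Hw).
have HnP : eps \notin edges_of (hl :: t).
  by apply: contra Hin; rewrite Es mem_cat => ->; rewrite orbT.
case: (boolP (has (fun u => u \in eps) (h0 :: hm ++ hl :: t))) => Hh.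
  case/hasP: Hh => w Hw Hwe.
  have : (w \in h0 :: hm) || (w \in hl :: t) by rewrite -mem_cat.
  case/orP => [HwU|HwP].
    move: HwU; rewrite in_cons => /orP[/eqP Hw0|Hwm].
      subst w; move: Hc; rewrite Hwe /= negbK => /eqP He0.
      by move: Hin; rewrite He0 f2.
    by move: Hin; rewrite (f5 _ _ Hwm HE Hwe).
  rewrite (Fq_val _ (Uniq1 Hin) Hin Hw Hwe) (Fq_val _ _ HnP HwP Hwe) //.
  by move=> a b Ha Hb; apply: Uniq1 => //; apply: Hsub.
rewrite (Fq_nohas _ Hh) Fq_nohas //.
apply: contra Hh => /hasP [w Hw Hwe]; apply/hasP; exists w => //.
exact: Hsub.
Qed.

Lemma gen_side (h0 : T) hm hl t zz (d : T) :
  upath h0 (hm ++ hl :: t) zz -> forall eps, eps \in E ->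
  Fq (hl :: t) d eps =
    (if eps == [set last h0 hm; hl] then q eps hl else 1) *
    (if eps == [set last h0 hm; hl] then 1 else Fq (hl :: t) d eps).
Proof.
move=> Hup eps HE.
case: (eqVneq eps [set last h0 hm; hl]) => Hel; last by rewrite mul1r.
rewrite mulr1 Hel.
have Hu2 : uniq ((h0 :: hm) ++ hl :: t) by case/and3P: Hup.
have Hnot : [set last h0 hm; hl] \notin edges_of (hl :: t).
  apply/negP => H; have := edges_cell H (set21 _ _) => Hin.
  move: Hu2; rewrite cat_uniq => /and3P[_ /hasP Hd _]; apply: Hd.
  by exists (last h0 hm) => //; exact: mem_last.
by rewrite /Fq Hnot /= set22.
Qed.

Lemma gen_prod (h0 : T) hm hl t zz (d d' : T) :
  upath h0 (hm ++ hl :: t) zz -> (forall c, c \in hm -> valency E c = 2%N) ->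
  let K := \prod_(eps in E) (if eps == [set last h0 hm; hl] then 1 else Fq (hl :: t) d' eps) in
  \prod_(eps in E) Fq (h0 :: hm ++ hl :: t) d eps = Qf E q [set h0; head hl hm] h0 * K /\
  \prod_(eps in E) Fq (hl :: t) d' eps = q [set last h0 hm; hl] hl * K.
Proof.
move=> Hup Hval K; split.
  rewrite (eq_bigr _ (fun eps HE => gen_main d d' Hup Hval HE)) big_split /=.
  by rewrite /Qf big_mkcondr.
rewrite (eq_bigr _ (fun eps HE => gen_side d' Hup HE)) big_split /=; congr (_ * _).
have Hin : [set last h0 hm; hl] \in E.
  case/and3P: Hup => Hp _ _; move: Hp; rewrite cat_path => /andP[_] /=.
  by case/andP.
rewrite -big_mkcondr (big_pred1 [set last h0 hm; hl]) //.
by move=> e /=; case: eqVneq => [->|]; rewrite ?Hin ?andbF.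
Qed.

End Gen.


Lemma head_rev (T : Type) (x : T) s : head x (rev s) = last x s.
Proof. by case/lastP: s => [|s y] //; rewrite rev_rcons last_rcons. Qed.

Lemma last_rev' (T : Type) (x : T) s : last x (rev s) = head x s.
Proof. by case: s => [|y s] //; rewrite rev_cons last_rcons. Qed.

Section Main.
Variables (T : finType) (V A : {set T}) (E : {set {set T}}) (f : T -> int)
  (q : {set T} -> T -> int) (v0 : T).
Hypothesis HdisjVA : [disjoint V & A].
Hypothesis HVA : V :|: A = setT.
Hypothesis E2 : forall e, e \in E -> #|e| = 2%N.
Hypothesis tree : is_tree E.
Hypothesis Harrow : forall a, a \in A -> valency E a = 1%N.
Hypothesis Hroot : is_root V E q v0.
Hypothesis Hneg : negative_dets V E q.
Hypothesis Hf : forall a, a \in A -> 0 <= f a.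

Local Notation upath := (upath E).

Lemma notVA c : c \in V -> c \in A -> False.
Proof. by move=> H1 H2; move: HdisjVA; rewrite disjoint_subset => /subsetP /(_ c H1); rewrite inE H2. Qed.

Lemma inV c : valency E c = 2%N -> c \in V.
Proof.
move=> Hc; have : c \in V :|: A by rewrite HVA inE.
rewrite inE => /orP[//|Ha]; by move: (Harrow Ha); rewrite Hc.
Qed.

Lemma root_lemma z s' w pu u w2 : upath v0 s' z -> v0 :: s' = w ++ pu :: u :: w2 ->
  u \in V -> forall eps, eps \in E -> u \in eps -> eps != [set pu; u] -> 1 <= q eps u.
Proof.
move=> Hup Heq HuV eps HE Hue Hne.
have Hu : uniq (v0 :: s') by case/and3P: Hup.
have Hus : u \in s'.
  case: w Heq => [|y w] /= [_ ->]; first exact: mem_head.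
  by rewrite mem_cat !in_cons eqxx !orbT.
have Hneq : u != v0.
  by apply/eqP => Hu0; move: Hu; rewrite /= -Hu0 Hus.
have Heq' : v0 :: s' = rcons w pu ++ u :: w2 by rewrite cat_rcons.
case: (upath_split_full Hup Heq') => [[w' [Hw' Hup']] _].
have Hg := gamma_eq tree Hup'.
case: Hroot => _ _ H3; case: (H3 u HuV Hneq) => H _; apply: H => //.
rewrite Hg Hw'; apply/negP => Hin.
have Hur : uniq (rcons (rcons w pu) u) by rewrite -Hw'; case/and3P: Hup'.
by move: Hne; rewrite (edges_last Hur Hin Hue) eqxx.
Qed.

Lemma Qf_val2 c e1 e2 : valency E c = 2%N -> e1 \in E -> e2 \in E -> c \in e1 -> c \in e2 ->
  e1 != e2 -> Qf E q e1 c = q e2 c.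
Proof.
move=> Hv H1 H2 C1 C2 N12; rewrite /Qf (big_pred1 e2) // => e /=.
case: (eqVneq e e2) => [->|Ne]; first by rewrite H2 C2 eq_sym N12.
apply/negbTE/negP => /and3P[He Ce Ne1].
by case: (val2 Hv H1 H2 He C1 C2 Ce N12) => Hx; [move: Ne1|move: Ne]; rewrite Hx eqxx.
Qed.

Section P.
Variables (v v' : T) (hm rp r1 : seq T).
Hypothesis Hv : v \in V.
Hypothesis Hv' : v' \in V.
Hypothesis Hg : upath v (rcons hm v') v'.
Hypothesis Hval : forall c, c \in hm -> valency E c = 2%N.
Hypothesis HR : upath v0 rp v'.
Hypothesis HRe : v0 :: rp = r1 ++ v :: rcons hm v'.

Local Notation G := (v :: rcons hm v').
Local Notation x i := (nth v (v :: rcons hm v') i).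
Local Notation n := (size hm).+1.

Lemma sizeG : size G = n.+1.
Proof. by rewrite /= size_rcons. Qed.

Lemma uniqG : uniq G.
Proof. by case/and3P: Hg. Qed.

Lemma x_inj i j : (i <= n)%N -> (j <= n)%N -> x i = x j -> i = j.
Proof.
move=> Hi Hj H; apply/eqP; rewrite -(nth_uniq v _ _ uniqG) ?sizeG ?ltnS // H //.
Qed.

Lemma x_adj i : (i < n)%N -> [set x i; x i.+1] \in E.
Proof.
move=> Hi; case/and3P: Hg => Hp _ _; move/(pathP v): Hp => /(_ i).
by rewrite size_rcons => /(_ Hi).
Qed.

Lemma x_int i : (0 < i < n)%N -> x i \in hm.
Proof.
case: i => [//|i] /andP[_ Hi]; rewrite ltnS in Hi.
by rewrite /= nth_rcons Hi mem_nth.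
Qed.

Lemma x1E : x 1 = head v' hm.
Proof. by case: hm. Qed.

Lemma xpenE : x (size hm) = last v hm.
Proof.
rewrite -rcons_cons nth_rcons /= ltnSn.
have := nth_last v (v :: hm); rewrite /= => <-. by [].
Qed.

Lemma xnE : x n = v'.
Proof. by rewrite /= nth_rcons ltnn eqxx. Qed.

Lemma x_V i : (i <= n)%N -> x i \in V.
Proof.
move=> Hi; case: i Hi => [|i] Hi; first exact: Hv.
case: (ltngtP i.+1 n) Hi => // [Hlt|->] _; last by rewrite xnE.
by apply: inV; apply: Hval; apply: x_int; rewrite Hlt.
Qed.

Lemma x_split i : (0 < i <= n)%N ->
  v0 :: rp = (r1 ++ take i.-1 G) ++ x i.-1 :: x i :: drop i.+1 G.
Proof.
case: i => [//|i] /andP[_ Hi] /=.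
rewrite HRe -catA; congr (r1 ++ _).
have H1 : (i < size G)%N by rewrite sizeG ltnS ltnW.
have H2 : (i.+1 < size G)%N by rewrite sizeG ltnS.
by rewrite -{1}(cat_take_drop i G) (drop_nth v H1) (drop_nth v H2).
Qed.

Lemma root_i i eps : (0 < i <= n)%N -> eps \in E -> x i \in eps ->
  eps != [set x i.-1; x i] -> 1 <= q eps (x i).
Proof.
move=> Hi; apply: (root_lemma HR (x_split Hi)).
by apply: x_V; case/andP: Hi.
Qed.

Lemma C_pos i : (0 < i <= n)%N -> 0 < Qf E q [set x i.-1; x i] (x i).
Proof.
move=> Hi; apply: prodr_gt0 => e /andP[He /andP[Hxe Hne]].
by apply: (lt_le_trans ltr01); apply: root_i.
Qed.

Lemma a_pos i : (i < n)%N -> 0 < q [set x i; x i.+1] (x i).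
Proof.
move=> Hi; have HE := x_adj Hi.
have Hne : forall j k, (j <= n)%N -> (k <= n)%N -> j <> k -> x j != x k.
  by move=> j k Hj Hk Hjk; apply/eqP => /(x_inj Hj Hk).
case: i Hi HE => [|i] Hi HE.
  case: (eqVneq v v0) => [Hvv0|Hvv0].
    by case: Hroot => _ H2 _; move: HE; rewrite /= Hvv0 => HE; rewrite (H2 _ HE) ?set21.
  case/lastP: r1 HRe => [|r1' pv] HRe'.
    by move: HRe' => [] /esym /eqP; rewrite (negbTE Hvv0).
  have Heq : v0 :: rp = r1' ++ pv :: v :: rcons hm v' by rewrite HRe' cat_rcons.
  apply: (lt_le_trans ltr01); apply: (root_lemma HR Heq Hv HE (set21 _ _)).
  apply/eqP => He.
  have : x 1 \in [set pv; v] by rewrite -He set22.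
  rewrite !inE => /orP[/eqP Hx1|/eqP Hx1].
    move: HR => /and3P[_ _]; rewrite Heq -cat_rcons cat_uniq => /and3P[_ /hasP H _].
    by apply: H; exists (x 1); [rewrite mem_nth // sizeG | rewrite -Hx1 mem_rcons mem_head].
  by move: (@x_inj 1%N 0%N isT isT Hx1).
apply: (lt_le_trans ltr01); apply: (@root_i i.+1) => //; first by rewrite /= ltnW.
  exact: set21.
apply/eqP => He.
have : x i.+2 \in [set x i; x i.+1] by rewrite -He set22.
rewrite !inE => /orP[/eqP Hx|/eqP Hx].
  by have := x_inj Hi (ltnW (ltnW Hi)) Hx; lia.
by have := x_inj Hi (ltnW Hi) Hx; lia.
Qed.

Lemma chain k : (k < n)%N ->
  q [set x 0; x 1] (x 0) * q [set x k; x k.+1] (x k.+1) <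
  Qf E q [set x 0; x 1] (x 0) * Qf E q [set x k; x k.+1] (x k.+1).
Proof.
elim: k => [|k IH] Hk.
  have := Hneg (@x_V 0%N isT) (x_V Hk) (x_adj Hk).
  by rewrite /detE subr_lt0.
have Hk' : (k < n)%N by apply: ltnW.
have IH' := IH Hk'.
have Hc : valency E (x k.+1) = 2%N by apply: Hval; apply: x_int; rewrite Hk.
have Hne : [set x k; x k.+1] != [set x k.+1; x k.+2].
  apply/eqP => He.
  have : x k \in [set x k.+1; x k.+2] by rewrite -He set21.
  rewrite !inE => /orP[/eqP Hx|/eqP Hx].
    by have := x_inj (ltnW Hk') Hk' Hx; lia.
  by have := x_inj (ltnW Hk') Hk Hx; lia.
have Q1 : Qf E q [set x k; x k.+1] (x k.+1) = q [set x k.+1; x k.+2] (x k.+1).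
  exact: (Qf_val2 Hc (x_adj Hk') (x_adj Hk) (set22 _ _) (set21 _ _) Hne).
have Q2 : Qf E q [set x k.+1; x k.+2] (x k.+1) = q [set x k; x k.+1] (x k.+1).
  by apply: (Qf_val2 Hc (x_adj Hk) (x_adj Hk') (set21 _ _) (set22 _ _)); rewrite eq_sym.
have Hdet := Hneg (x_V (ltnW Hk)) (x_V Hk) (x_adj Hk).
move: Hdet; rewrite /detE Q2 => Hdet.
rewrite Q1 in IH'.
have P1 := a_pos Hk.
have P2 : 0 < Qf E q [set x k.+2.-1; x k.+2] (x k.+2) by apply: C_pos.
have P0 := @a_pos 0%N isT.
move: P1 P2 P0 Hdet IH'.
set a0 := q _ (x 0); set A0 := Qf E q _ (x 0).
set ak := q _ (x k.+1); set bk := q _ (x k.+2).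
set bk1 := q [set x k; x k.+1] (x k.+1); set C := Qf E q _ (x k.+2).
move=> P1 P2 P0 Hdet IH'.
nia.
Qed.

Lemma x0E : x 0 = v.
Proof. by []. Qed.

Lemma per_alpha a : a \in A -> f a != 0 ->
  q [set v; head v' hm] v * xva E f q v' a - Qf E q [set last v hm; v'] v' * xva E f q v a <= 0 /\
  (tree_lt E v0 v' a ->
   q [set v; head v' hm] v * xva E f q v' a - Qf E q [set last v hm; v'] v' * xva E f q v a < 0).
Proof.
move=> Ha Hfa.
have Hfpos : 0 < f a by rewrite lt_def Hfa Hf.
have Hchain : q [set v; head v' hm] v * q [set last v hm; v'] v' <
              Qf E q [set v; head v' hm] v * Qf E q [set last v hm; v'] v'.
  by have := chain (ltnSn (size hm)); rewrite xpenE xnE x1E x0E.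
have HvA : a \notin V by apply/negP => H; apply: (notVA H Ha).
have Hvv' : v != v'.
  apply/eqP => H; have := uniqG; rewrite /= mem_rcons in_cons H eqxx //.
case: (gamma_upath tree v' a) => pa' [Hg'a Hpa'].
case: (dec tree Hg Hpa') => s1 [c [s2 [t2 [Hs Ht Hn Hga]]]].
case/lastP: s2 Hs Ht => [|s2' y] Hs Ht.
  move: Hs; rewrite cats1 -rcons_cons => /rcons_inj [Hs1 Hc]; subst s1 c.
  move: Ht => /= [Ht]; subst t2.
  case: (gamma_upath tree v a) => s0 [Hs0 Hup].
  rewrite Hga in Hs0; case: Hs0 => Hs0; rewrite -Hs0 in Hup.
  have Hud : ~~ has (mem (v :: hm)) (v' :: pa').
    by case/and3P: Hup => _ _; rewrite -cat_cons cat_uniq => /and3P[].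
  have HRe' : v0 :: rp = rcons (r1 ++ v :: hm) v' by rewrite HRe rcons_cat rcons_cons.
  have Hga0 : gamma E v0 a = (r1 ++ v :: hm) ++ v' :: pa'.
    case: (dec tree HR Hpa') => s1' [c' [s2' [t2' [Hs' Ht' Hn' Hga']]]].
    case/lastP: s2' Hs' Ht' => [|s2'' y'] Hs' Ht'.
      move: Hs'; rewrite HRe' cats1 => /rcons_inj [Hs1' Hc']; subst s1' c'.
      by move: Ht' => /= [->].
    move: Hs'; rewrite HRe' -rcons_cons -rcons_cat => /rcons_inj [Hs1' Hy'].
    subst y'.
    have Hlast : last c' s2'' = last v hm.
      by have := congr1 (last v0) Hs1'; rewrite !last_cat.
    move: Ht'; rewrite rev_rcons => -[Ht'].
    have Hin : last v hm \in pa'.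
      rewrite Ht' mem_cat in_cons mem_rev -Hlast.
      by have := mem_last c' s2''; rewrite in_cons => /orP[->|->]; rewrite ?orbT.
    move: Hud => /hasP; case; exists (last v hm); first by rewrite in_cons Hin orbT.
    exact: mem_last.
  case: (gamma_upath tree v0 a) => rpa [Hrpa Hrpa_up].
  rewrite Hga0 in Hrpa.
  have Heu : forall u w1 w2, pa' = w1 ++ u :: w2 -> [set last v' w1; u] \in edges_of (v' :: pa').
    move=> u w1 w2 ->; rewrite -cat_cons edges_cat mem_cat lastI edges_rcons2 //.
  have EpE : forall e, e \in edges_of (v' :: pa') -> e \in E.
    by move=> e He; case/and3P: Hpa' => Hp _ _; move: Hp; rewrite -edges_all => /allP /(_ _ He).
  case: (gen_prod E2 tree q v v' Hup Hval) => P1 P2.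
  rewrite !xva_Fq Hg'a Hga cat_cons P1 P2.
  set K := \prod_(_ in _) _.
  have HK : 0 < K.
    rewrite /K; apply: prodr_gt0 => eps HE.
    case: ifP => [_|/negbT Hne]; first exact: ltr01.
    rewrite /Fq; case: ifP => [/andP[Hnot Hh]|_]; last exact: ltr01.
    set u := nth v' (v' :: pa') _.
    have Hu : u \in v' :: pa' by apply: mem_nth; rewrite -has_find.
    have Hue : u \in eps := nth_find v' Hh.
    have HuV : u \in V.
      case: (boolP (u \in A)) => HuA; last first.
        have : u \in V :|: A by rewrite HVA inE.
        by rewrite inE (negbTE HuA) orbF.
      move: Hu; rewrite in_cons => /orP[/eqP Huv'|Hu].
        by move: HuA; rewrite Huv' => HuA; case: (notVA Hv' HuA).
      case: (mem_split Hu) => w1 [w2 Hw].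
      have He := Heu _ _ _ Hw.
      have := val1 (Harrow HuA) (EpE _ He) HE (set22 _ _) Hue.
      by move=> Heq; move: Hnot; rewrite -Heq He.
    apply: (lt_le_trans ltr01).
    move: Hu; rewrite in_cons => /orP[/eqP Huv'|Hu].
      have Heq : v0 :: rpa = (r1 ++ belast v hm) ++ last v hm :: u :: pa'.
        by rewrite -Hrpa Huv' -!catA (lastI v hm) cat_rcons.
      by apply: (root_lemma Hrpa_up Heq HuV HE Hue); rewrite Huv'.
    case: (mem_split Hu) => w1 [w2 Hw].
    have Heq : v0 :: rpa = (r1 ++ v :: hm ++ belast v' w1) ++ last v' w1 :: u :: w2.
      rewrite -Hrpa Hw -!catA /=; congr (r1 ++ v :: _); rewrite -catA; congr (hm ++ _).
      by rewrite -cat_cons (lastI v' w1) cat_rcons.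
    apply: (root_lemma Hrpa_up Heq HuV HE Hue).
    by apply: contra Hnot => /eqP ->; apply: Heu Hw.
  have Hlt : q [set v; head v' hm] v * (f a * (q [set last v hm; v'] v' * K)) -
             Qf E q [set last v hm; v'] v' * (f a * (Qf E q [set v; head v' hm] v * K)) < 0.
    have -> : q [set v; head v' hm] v * (f a * (q [set last v hm; v'] v' * K)) -
             Qf E q [set last v hm; v'] v' * (f a * (Qf E q [set v; head v' hm] v * K)) =
       (f a * K) * (q [set v; head v' hm] v * q [set last v hm; v'] v' -
          Qf E q [set v; head v' hm] v * Qf E q [set last v hm; v'] v') by ring.
    by rewrite pmulr_rlt0 ?mulr_gt0 // subr_lt0.
  by split; [apply: ltW | move=> _].
case: s1 Hs Hga => [|z s1'] Hs Hga.
  move: Hs => /= [Hc Hs']; subst c.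
  move: Hs' => /rcons_inj [Hs2 Hy]; subst s2' y.
  move: Ht; rewrite rev_rcons => -[Hpa]; subst pa'.
  have Hval' : forall c, c \in rev hm -> valency E c = 2%N.
    by move=> c; rewrite mem_rev; apply: Hval.
  case: (gen_prod E2 tree q v' v Hpa' Hval') => P1 P2.
  rewrite !xva_Fq Hg'a Hga /= P1 P2 head_rev last_rev'.
  rewrite [[set v'; last v hm]]setUC [[set head v' hm; v]]setUC.
  split.
    set K := \prod_(_ in _) _.
    set qq := q _ v; set Q' := Qf E q _ v'.
    have -> : qq * (f a * (Q' * K)) - Q' * (f a * (qq * K)) = 0 by ring.
    exact: lexx.
  move=> /andP[_ Hin].
  case: (gamma_upath tree v0 a) => rpa [Hga0 Hrpa].
  rewrite Hga0 in Hin; case: (mem_split Hin) => w1 [w2 Hw12].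
  case: (upath_split_full Hrpa Hw12) => [[w [Hw Hupw]] Hw2].
  have Hw2' := gamma_eq tree Hw2; rewrite Hg'a in Hw2'; case: Hw2' => Hw2'.
  have Hwrp := upath_unique tree Hupw HR.
  have Hvw1 : v \in w1.
    have : v \in rcons w1 v' by rewrite -Hw Hwrp HRe mem_cat mem_head orbT.
    by rewrite mem_rcons in_cons (negbTE Hvv').
  case/and3P: Hrpa => _ _; rewrite Hw12 cat_uniq => /and3P[_ /hasP H _].
  apply: False_ind; apply: H; exists v => //.
  by rewrite -Hw2' in_cons mem_cat mem_head !orbT.
move: Hs => [Hz Hs'].
have Hhm : hm = s1' ++ c :: s2'.
  by move: Hs'; rewrite -rcons_cons -rcons_cat => /rcons_inj [].
have Hc : c \in hm by rewrite Hhm mem_cat mem_head orbT.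
have Hcv := Hval Hc.
case: t2 Ht Hn Hga => [|w t2''] Ht Hn Hga.
  have : last v' (v' :: pa') = c by rewrite Ht cats1 last_rcons.
  case/and3P: Hpa' => _ /eqP Hl _; rewrite /= Hl => Hac.
  by move: (Harrow Ha); rewrite Hac Hcv.
have He : [set c; w] \in edges_of (v' :: pa').
  by rewrite Ht edges_cat mem_cat edges_cons2 mem_head orbT.
have HeE : [set c; w] \in E.
  by case/and3P: Hpa' => Hp _ _; move: Hp; rewrite -edges_all => /allP /(_ _ He).
have Hg' : upath v (hm ++ [:: v']) v' by rewrite cats1.
have := interior_edges Hg' Hval Hc HeE (set21 _ _) => Hin.
have := edges_cell Hin (set22 _ _); rewrite cats1 => Hw.
by move: Hn; rewrite /= negb_or => /andP[Hn _]; move: Hn; rewrite Hw.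
Qed.

End P.

End Main.

Unset Implicit Arguments.

Theorem proposition5p8 (T : finType) (V A : {set T}) (E : {set {set T}})
  (f : T -> int) (q : {set T} -> T -> int) (v0 : T) :
  decorated_tree V A E f q -> is_root V E q v0 -> negative_dets V E q ->
  (forall a, a \in A -> 0 <= f a) ->
  forall v v' : T, v \in V -> v' \in V -> tree_lt E v0 v v' ->
  linear_path E (gamma E v v') ->
  let g := gamma E v v' in
  let n := (size g).-1 in
  let qq := q [set nth v g 0; nth v g 1] v in
  let Q' := Qf E q [set nth v g n.-1; nth v g n] v' in
  (0 < qq /\ 0 < Q' /\ qq * Nv A E f q v' - Q' * Nv A E f q v <= 0) /\
  ((exists a, [/\ a \in A, f a != 0 & tree_lt E v0 v' a]) ->
     qq * Nv A E f q v' - Q' * Nv A E f q v < 0).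
Proof.
move=> Hdt Hroot Hneg Hf v v' Hv Hv' Hlt Hlin.
case: Hdt => HdisjVA [HVA [E2 [tree [Harrow [Hqa Hgcd]]]]].
case: (gamma_upath tree v v') => gp [Hgeq Hgp].
have Hvv' : v != v' by case/andP: Hlt.
case/lastP: gp Hgeq Hgp => [|hm y] Hgeq Hgp.
  by case/and3P: Hgp => _ /eqP /= Hl _; rewrite Hl eqxx in Hvv'.
have Hy : y = v' by case/and3P: Hgp => _ /eqP; rewrite last_rcons.
subst y.
rewrite Hgeq in Hlin *.
have Hval : forall c, c \in hm -> valency E c = 2%N.
  move: Hlin => /andP[_ /allP Hall] c Hc.
  have Hi : (index c hm).+1 \in iota 1 (size (v :: rcons hm v') - 2).
    by rewrite mem_iota /= size_rcons add1n subn2 /= ltnS index_mem Hc.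
  have := Hall _ Hi; rewrite /= nth_rcons index_mem Hc nth_index //.
  by move/eqP.
case: (gamma_upath tree v0 v') => rp [HR0 HR].
move: Hlt => /andP[_]; rewrite HR0 => Hin.
case: (mem_split Hin) => r1 [r2 HRe].
case: (upath_split_full HR HRe) => _ Hr2.
have Hr2' := upath_unique tree Hr2 Hgp; subst r2.
have Hn : (size (v :: rcons hm v')).-1 = (size hm).+1 by rewrite /= size_rcons.
cbv zeta; rewrite Hn /= -/(nth v (v :: rcons hm v') (size hm)).
have H1 : nth v (rcons hm v') 0 = head v' hm by case: hm {Hgeq Hgp Hlin Hval HRe Hr2 Hn}.
have H2 : nth v (rcons hm v') (size hm) = v' by rewrite nth_rcons ltnn eqxx.
rewrite H1 H2 xpenE.
have Pa := per_alpha HdisjVA HVA E2 tree Harrow Hroot Hneg Hf Hv Hv' Hgp Hval HR HRe.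
have Hsum : q [set v; head v' hm] v * Nv A E f q v' - Qf E q [set last v hm; v'] v' * Nv A E f q v =
  \sum_(a in A | f a != 0) (q [set v; head v' hm] v * xva E f q v' a -
                            Qf E q [set last v hm; v'] v' * xva E f q v a).
  by rewrite /Nv !mulr_sumr -sumrB.
rewrite Hsum; split; first split.
- have := a_pos HdisjVA HVA tree Harrow Hroot Hv Hv' Hgp Hval HR HRe (i:=0) isT.
  by rewrite x1E.
- split.
    have := C_pos HVA tree Harrow Hroot Hv Hv' Hval HR HRe (i:=(size hm).+1).
    rewrite /= xpenE H2; apply.
    by rewrite leqnn.
  by apply: sumr_le0 => a /andP[Ha Hfa]; case: (Pa a Ha Hfa).
- move=> [a [Ha Hfa Hlta]].
  rewrite (bigD1 a) /=; last by rewrite Ha Hfa.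
  have H3 := (Pa a Ha Hfa).2 Hlta.
  have H4 : \sum_(i | ((i \in A) && (f i != 0)) && (i != a))
     (q [set v; head v' hm] v * xva E f q v' i - Qf E q [set last v hm; v'] v' * xva E f q v i) <= 0.
    by apply: sumr_le0 => b /andP[/andP[Hb Hfb] _]; case: (Pa b Hb Hfb).
  by have := ltr_leD H3 H4; rewrite addr0.
Qed.
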